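(* Let $(V,\le,\preccurlyeq)$ be a mixed lattice vector space equipped with a vector topology $\tau$. The following are equivalent: (a) $(x,y)\mapsto x\curlyvee y$ from $V\times V$ to $V$ is uniformly continuous; (b) $(x,y)\mapsto x\curlywedge y$ from $V\times V$ to $V$ is uniformly continuous; (c) $x\mapsto {}^ux$ is uniformly continuous; (d) $x\mapsto {}^lx$ is uniformly continuous; (e) $x\mapsto |x|_{lu}$ is uniformly continuous; (f) $x\mapsto |x|_{ul}$ is uniformly continuous; (g) $x\mapsto x^l$ is uniformly continuous; (h) $x\mapsto x^u$ is uniformly continuous.
   Context: A mixed lattice vector space $(V,\le,\preccurlyeq)$ is a real vector space $V$ with two partial orderings $\le$ (initial order) and $\preccurlyeq$ (specific order), each making $V$ a partially ordered vector space, with positive cones $V_p=\{x:0\le x\}$, $V_{sp}=\{x:0\preccurlyeq x\}$, such that: (1) for all $x,y$ the elements $x\curlyvee y=\min\{w: w\succcurlyeq x,\ w\ge y\}$ and $x\curlywedge y=\max\{w: w\preccurlyeq x,\ w\le y\}$ exist (min/max with respect to $\le$); (2) $x\preccurlyeq y$ implies $x\le y$; (3) $x\curlyvee y, x\curlywedge y\in V_{sp}$ whenever $x,y\in V_{sp}$. Notation: $x^u=0\curlyvee x$, $x^l=0\curlyvee(-x)$, ${}^ux=x\curlyvee 0$, ${}^lx=(-x)\curlyvee 0$, $|x|_{ul}=x\curlyvee(-x)$, $|x|_{lu}=(-x)\curlyvee x$. A map $f:V\to V$ is uniformly continuous if for every neighborhood $W$ of $0$ there is a neighborhood $U$ of $0$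 with $x-y\in U\Rightarrow f(x)-f(y)\in W$; a map $g:V\times V\to V$ is uniformly continuous if for every neighborhood $W$ of $0$ there is a neighborhood $U$ of $0$ such that $x-x'\in U$ and $y-y'\in U$ imply $g(x,y)-g(x',y')\in W$. *)

(* Defs.v *)
From HB Require Import structures.
From mathcomp Require Import all_boot all_order all_algebra.
From mathcomp Require Import all_classical all_reals.
From mathcomp Require Import topology tvs.
Set Implicit Arguments. Unset Strict Implicit. Unset Printing Implicit Defensive.
Import Order.TTheory GRing.Theory Num.Theory.
Local Open Scope ring_scope.
Local Open Scope classical_set_scope.

Definition ordered_vector_order (R : realType) (V : lmodType R)
    (le : V -> V -> Prop) : Prop :=
  [/\ (forall x, le x x),
      (forall x y, le x y -> le y x -> x = y),
      (forall x y z, le x y -> le y z -> le x z),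
      (forall x y z, le x y -> le (x + z) (y + z)) &
      (forall (a : R) x y, 0 <= a -> le x y -> le (a *: x) (a *: y))].

Definition is_least {V : Type} (le : V -> V -> Prop) (S : set V) (m : V) :=
  S m /\ forall w, S w -> le m w.

Definition is_greatest {V : Type} (le : V -> V -> Prop) (S : set V) (m : V) :=
  S m /\ forall w, S w -> le w m.

(* (V, le, sle) is a mixed lattice vector space, where
   [msup x y] is x ⋎ y = min_le {w | w ≽ x, w ≥ y} and
   [minf x y] is x ⋏ y = max_le {w | w ≼ x, w ≤ y}.
   (Existence of these min/max is expressed by the given operations;
    uniqueness follows from antisymmetry of le.) *)
Definition mixed_lattice_vector_space (R : realType) (V : lmodType R)
    (le sle : V -> V -> Prop) (msup minf : V -> V -> V) : Prop :=
  ordered_vector_order le /\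
  ordered_vector_order sle /\
  (forall x y, is_least le [set w | sle x w /\ le y w] (msup x y)) /\
  (forall x y, is_greatest le [set w | sle w x /\ le w y] (minf x y)) /\
  (forall x y, sle x y -> le x y) /\
  (forall x y, sle 0 x -> sle 0 y -> sle 0 (msup x y) /\ sle 0 (minf x y)).

Definition unif_cont1 (R : realType) (V : topologicalLmodType R) (f : V -> V) :=
  forall W : set V, nbhs (0 : V) W ->
    exists U : set V, nbhs (0 : V) U /\
      forall x y, U (x - y) -> W (f x - f y).

Definition unif_cont2 (R : realType) (V : topologicalLmodType R)
    (g : V -> V -> V) :=
  forall W : set V, nbhs (0 : V) W ->
    exists U : set V, nbhs (0 : V) U /\
      forall x y x' y', U (x - x') -> U (y - y') -> W (g x y - g x' y').

(* Main.v *)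
Require Import Defs.
From HB Require Import structures.
From mathcomp Require Import all_boot all_order all_algebra.
From mathcomp Require Import all_classical all_reals.
From mathcomp Require Import topology tvs.
Import Order.TTheory GRing.Theory Num.Theory.
Local Open Scope ring_scope.
Local Open Scope classical_set_scope.

Section T.
Variables (R : realType) (V : topologicalLmodType R).

Lemma T1 {W : set V} : nbhs (0:V) W -> exists W1 : set V, nbhs (0:V) W1 /\
  forall a b, W1 a -> W1 b -> W (a + b).
Proof.
move=> W0.
have := @add_continuous V (0, 0); rewrite /continuous_at/= addr0 => /(_ W W0)[]/=.
move=> [A B] [/= A0 B0] AB.
exists (A `&` B); split; first exact: filterI.
by move=> a b [Aa _] [_ Bb]; exact: (AB (a, b)).
Qed.

Lemma T2 {U : set V} (c : R) : nbhs (0:V) U -> nbhs (0:V) (fun v => U (c *: v)).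
Proof.
move=> U0.
have := @scale_continuous R V (c, 0); rewrite /continuous_at/= scaler0 => /(_ U U0)[]/=.
move=> [A B] [/= A0 B0] AB.
apply: filterS B0 => v Bv; have := AB (c, v); apply; split => //=.
exact: nbhs_singleton A0.
Qed.

Lemma uc1_ext (f g : V -> V) : (forall x, f x = g x) -> unif_cont1 f -> unif_cont1 g.
Proof.
move=> fg uf W W0; have [U [U0 HU]] := uf W W0; exists U; split => // x y Uxy.
by rewrite -!fg; exact: HU.
Qed.

Lemma uc1_comp (f : V -> V) (c : R) : unif_cont1 f -> unif_cont1 (fun x => f (c *: x)).
Proof.
move=> uf W W0; have [U [U0 HU]] := uf W W0.
exists (fun v => U (c *: v)); split; first exact: T2.
by move=> x y Uxy; apply: HU; rewrite -scalerBr.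
Qed.

Lemma uc1_add (f : V -> V) (a : R) : unif_cont1 f -> unif_cont1 (fun x => a *: x + f x).
Proof.
move=> uf W W0; have [W1 [W10 HW1]] := T1 W0.
have [U [U0 HU]] := uf W1 W10.
exists (U `&` (fun v => W1 (a *: v))); split; first exact: filterI (T2 a W10).
move=> x y [Uxy Wxy].
have -> : a *: x + f x - (a *: y + f y) = a *: (x - y) + (f x - f y).
  by rewrite scalerBr opprD addrACA.
exact: HW1 (HU _ _ Uxy).
Qed.

Lemma uc1_affine (f h : V -> V) (a c : R) : c != 0 ->
  (forall x, h x = a *: x + f (c *: x)) -> (unif_cont1 h <-> unif_cont1 f).
Proof.
move=> c0 hE; split => u.
  apply: (@uc1_ext (fun x => (- (a / c)) *: x + h (c^-1 *: x))).
    move=> x; rewrite hE !scalerA (divff c0) scale1r addrA -scalerDl.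
    by rewrite addNr scale0r add0r.
  exact/uc1_add/uc1_comp.
apply: (@uc1_ext (fun x => a *: x + f (c *: x))) => //.
by apply: uc1_add; apply: uc1_comp.
Qed.

Lemma uc2_neg (g1 g2 : V -> V -> V) : (forall x y, g2 x y = - g1 (-x) (-y)) ->
  unif_cont2 g1 -> unif_cont2 g2.
Proof.
move=> gE ug W W0.
have [U [U0 HU]] := ug _ (T2 (-1) W0).
exists (fun v => U ((-1) *: v)); split; first exact: T2.
move=> x y x' y' Ux Uy; rewrite !gE.
have := HU (- x) (- y) (- x') (- y').
have E : forall a b : V, - a - - b = (-1) *: (a - b).
  by move=> a b; rewrite scaleN1r opprB opprK addrC.
by rewrite !E; apply.
Qed.

Lemma uc2_uc1 (g : V -> V -> V) : (forall x y, g x y = x + g 0 (y - x)) ->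
  (unif_cont2 g <-> unif_cont1 (fun y => g 0 y)).
Proof.
move=> gE; split => u W W0.
  have [U [U0 HU]] := u W W0; exists U; split => // x y Uxy.
  by apply: HU => //; rewrite subr0; exact: nbhs_singleton U0.
have [W1 [W10 HW1]] := T1 W0.
have [U1 [U10 HU1]] := u W1 W10.
have [U2 [U20 HU2]] := T1 U10.
exists (W1 `&` (U2 `&` (fun v => U2 ((-1) *: v)))); split.
  by apply: filterI => //; apply: filterI => //; exact: T2.
move=> x y x' y' [Wx [Ux Unx]] [Wy [Uy Uny]].
rewrite (gE x) (gE x').
have -> : x + g 0 (y - x) - (x' + g 0 (y' - x')) =
   (x - x') + (g 0 (y - x) - g 0 (y' - x')) by rewrite opprD addrACA.
apply: HW1 => //; apply: HU1.
have -> : y - x - (y' - x') = (y - y') + (-1) *: (x - x').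
  by rewrite scaleN1r !opprB addrACA [RHS]addrACA [- y' + _]addrC.
exact: HU2.
Qed.
End T.

Theorem proposition3p3 (R : realType) (V : topologicalLmodType R)
    (le sle : V -> V -> Prop) (msup minf : V -> V -> V)
    (HV : mixed_lattice_vector_space le sle msup minf) :
  let xu  := fun x : V => msup 0 x in          (* x^u   = 0 ⋎ x      *)
  let xl  := fun x : V => msup 0 (- x) in      (* x^l   = 0 ⋎ (-x)   *)
  let ux  := fun x : V => msup x 0 in          (* ^u x  = x ⋎ 0      *)
  let lx  := fun x : V => msup (- x) 0 in      (* ^l x  = (-x) ⋎ 0   *)
  let aul := fun x : V => msup x (- x) in      (* |x|_ul = x ⋎ (-x)  *)
  let alu := fun x : V => msup (- x) x in      (* |x|_lu = (-x) ⋎ x  *)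
  (unif_cont2 msup <-> unif_cont2 minf) /\
      (unif_cont2 minf <-> unif_cont1 ux) /\
      (unif_cont1 ux <-> unif_cont1 lx) /\
      (unif_cont1 lx <-> unif_cont1 alu) /\
      (unif_cont1 alu <-> unif_cont1 aul) /\
      (unif_cont1 aul <-> unif_cont1 xl) /\
      (unif_cont1 xl <-> unif_cont1 xu).
Proof.
move=> xu xl ux lx aul alu.
move: HV; rewrite /mixed_lattice_vector_space /ordered_vector_order.
move=> [[_ le_anti _ le_add _] [[_ _ _ sle_add _] [Hsup [Hinf [_ _]]]]].
have trans : forall x y z, msup (x + z) (y + z) = msup x y + z.
  move=> x y z; apply: le_anti.
    apply: (Hsup (x + z) (y + z)).2; split.
      exact: sle_add (Hsup x y).1.1.
    exact: le_add (Hsup x y).1.2.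
  set m' := msup (x + z) (y + z).
  have H1 : le (msup x y) (m' - z).
    apply: (Hsup x y).2; split.
      by have := sle_add _ _ (- z) (Hsup (x + z) (y + z)).1.1; rewrite addrK.
    by have := le_add _ _ (- z) (Hsup (x + z) (y + z)).1.2; rewrite addrK.
  by have := le_add _ _ z H1; rewrite subrK.
have sflip : forall a b, sle a b -> sle (- b) (- a).
  move=> a b /(sle_add _ _ (- a - b)).
  by rewrite addrA subrr add0r addrCA subrr addr0.
have flip : forall a b, le a b -> le (- b) (- a).
  move=> a b /(le_add _ _ (- a - b)).
  by rewrite addrA subrr add0r addrCA subrr addr0.
have infE : forall x y, minf x y = - msup (- x) (- y).
  move=> x y; apply: le_anti.
    have [s l] := (Hinf x y).1.
    have := flip _ _ ((Hsup (- x) (- y)).2 (- minf x y) (conj (sflip _ _ s) (flip _ _ l))).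
    by rewrite opprK.
  apply: (Hinf x y).2; split.
    by have := sflip _ _ (Hsup (- x) (- y)).1.1; rewrite opprK.
  by have := flip _ _ (Hsup (- x) (- y)).1.2; rewrite opprK.
have supE : forall x y, msup x y = x + msup 0 (y - x).
  by move=> x y; have := trans 0 (y - x) x; rewrite add0r subrK addrC.
have Pm : unif_cont2 msup <-> unif_cont1 xu by exact: uc2_uc1.
have Pi : unif_cont2 minf <-> unif_cont2 msup.
  split; apply: uc2_neg => // x y; by rewrite infE !opprK.
have Pux : unif_cont1 ux <-> unif_cont1 xu.
  apply: (@uc1_affine _ _ xu ux 1 (-1)); first by rewrite oppr_eq0 oner_eq0.
  by move=> x; rewrite /ux /xu supE scale1r scaleN1r sub0r.
have Plx : unif_cont1 lx <-> unif_cont1 xu.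
  apply: (@uc1_affine _ _ xu lx (-1) 1); first by rewrite oner_eq0.
  by move=> x; rewrite /lx /xu supE scaleN1r scale1r sub0r opprK.
have Palu : unif_cont1 alu <-> unif_cont1 xu.
  apply: (@uc1_affine _ _ xu alu (-1) 2%:R); first by rewrite pnatr_eq0.
  by move=> x; rewrite /alu /xu supE scaleN1r scaler_nat mulr2n opprK.
have Paul : unif_cont1 aul <-> unif_cont1 xu.
  apply: (@uc1_affine _ _ xu aul 1 (- 2%:R)); first by rewrite oppr_eq0 pnatr_eq0.
  by move=> x; rewrite /aul /xu supE scale1r scaleNr scaler_nat mulr2n opprD.
have Pxl : unif_cont1 xl <-> unif_cont1 xu.
  apply: (@uc1_affine _ _ xu xl 0 (-1)); first by rewrite oppr_eq0 oner_eq0.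
  by move=> x; rewrite /xl /xu scale0r add0r scaleN1r.
move: Pi Pm Pux Plx Palu Paul Pxl; clear; tauto.
Qed.
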